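(* Let $(A,\boxplus,0)$ be a mosaic satisfying (Lms1) $0,x\in x\boxplus x$ for all $x\in A$ and (Lms2) $(x\boxplus x)\boxplus(x\boxplus x)=x\boxplus x$ for all $x\in A$. Then for every $x\in A$, $A_x:=x\boxplus x$ is a strong submosaic of $A$. Moreover, for any strong submosaic $B$ of $A$, \[ B=\bigcup_{x\in B}A_x=\bigcup_{x\in B}B_x, \] where $B_x:=(x\boxplus x)\cap B$.
   Context: A multioperation on $A$ is a function $\boxplus:A\times A\to\wp(A)$; for subsets, $X\boxplus Y:=\bigcup_{x\in X,y\in Y}x\boxplus y$. A mosaic $(A,\boxplus,e)$ is a set with a multioperation with neutral element $e$ ($e\boxplus x=x\boxplus e=\{x\}$) that is $\rho$-reversible for some endofunction $\rho$ ($z\in x\boxplus y$ implies $x\in z\boxplus\rho(y)$ and $y\in\rho(x)\boxplus z$). A submosaic is a subset $B\ni e$ such that, with the induced multioperation $x\boxplus_B y:=(x\boxplus y)\cap B$, the inclusion $B\to A$ is an embedding of magmata and $(B,\boxplus_B,e)$ is a mosaic; it is a strong submosaic if moreover the inclusion is a strong morphism, i.e. $x\boxplus y\subseteq B$ for all $x,y\in B$. *)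

(* Defs.v *)
Set Implicit Arguments.

(* A multioperation on A: [op x y z] means z \in x [+] y. *)
Definition multiop (A : Type) := A -> A -> A -> Prop.

Definition is_mosaic (A : Type) (op : multiop A) (e : A) : Prop :=
  (forall x z, op e x z <-> z = x) /\
  (forall x z, op x e z <-> z = x) /\
  exists rho : A -> A, forall x y z,
    op x y z -> op z (rho y) x /\ op (rho x) z y.

Definition magma_morphism (B A : Type) (opB : multiop B) (opA : multiop A)
  (f : B -> A) : Prop :=
  forall x y z, opB x y z -> opA (f x) (f y) (f z).

Definition magma_embedding (B A : Type) (opB : multiop B) (opA : multiop A)
  (f : B -> A) : Prop :=
  (forall x y, f x = f y -> x = y) /\
  forall x y z, opB x y z <-> opA (f x) (f y) (f z).

Definition strong_morphism (B A : Type) (opB : multiop B) (opA : multiop A)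
  (f : B -> A) : Prop :=
  magma_morphism opB opA f /\
  forall x y w, opA (f x) (f y) w -> exists z, w = f z /\ opB x y z.

Definition subT (A : Type) (B : A -> Prop) := {x : A | B x}.
Definition induced_op (A : Type) (op : multiop A) (B : A -> Prop)
  : multiop (subT B) :=
  fun x y z => op (proj1_sig x) (proj1_sig y) (proj1_sig z).

Definition submosaic (A : Type) (op : multiop A) (e : A) (B : A -> Prop) : Prop :=
  exists He : B e,
    magma_embedding (@induced_op A op B) op (@proj1_sig A B) /\
    is_mosaic (@induced_op A op B) (exist B e He : subT B).

Definition strong_submosaic (A : Type) (op : multiop A) (e : A) (B : A -> Prop)
  : Prop :=
  submosaic op e B /\ strong_morphism (@induced_op A op B) op (@proj1_sig A B).

(* Main.v *)
Require Import Defs.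
From Stdlib Require Import ProofIrrelevance.

Lemma sub_inj (A : Type) (B : A -> Prop) (x y : subT B) :
  proj1_sig x = proj1_sig y -> x = y.
Proof.
  destruct x as [x hx], y as [y hy]; simpl; intro E; subst.
  f_equal; apply proof_irrelevance.
Qed.

Theorem mainTheorem11 (A : Type) (op : multiop A) (zero : A)
  (Hmos : is_mosaic op zero)
  (Lms1 : forall x, op x x zero /\ op x x x)
  (Lms2 : forall x w,
      (exists a b, op x x a /\ op x x b /\ op a b w) <-> op x x w) :
  (forall x, strong_submosaic op zero (fun w => op x x w)) /\
  (forall B : A -> Prop, strong_submosaic op zero B ->
     forall w,
       (B w <-> exists x, B x /\ op x x w) /\
       (B w <-> exists x, B x /\ (op x x w /\ B w))).
Proof.
  destruct Hmos as [Hl [Hr [rho Hrho]]].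
  assert (Hid : forall y, rho y = y).
  { intro y. destruct (Hrho y y zero (proj1 (Lms1 y))) as [H1 _].
    apply Hl in H1. symmetry; exact H1. }
  split.
  - intro x. split.
    + exists (proj1 (Lms1 x)). split.
      * split.
        -- apply sub_inj.
        -- intros; unfold induced_op; tauto.
      * split; [|split].
        -- intros a c; unfold induced_op; simpl; split.
           ++ intro H; apply Hl in H; apply sub_inj; exact H.
           ++ intro H; subst; apply Hl; reflexivity.
        -- intros a c; unfold induced_op; simpl; split.
           ++ intro H; apply Hr in H; apply sub_inj; exact H.
           ++ intro H; subst; apply Hr; reflexivity.
        -- exists (fun a => a). intros a b c; unfold induced_op; simpl.
           intro H. destruct (Hrho _ _ _ H) as [H1 H2].
           rewrite Hid in H1, H2. split; assumption.
    + split.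
      * intros a b c H; exact H.
      * intros a b w H. assert (Hw : op x x w).
        { apply Lms2. exists (proj1_sig a), (proj1_sig b).
          destruct a, b; simpl in *; auto. }
        exists (exist _ w Hw). split; [reflexivity | exact H].
  - intros B [_ [_ HS]] w.
    assert (Hcl : forall x, B x -> op x x w -> B w).
    { intros x Bx H. destruct (HS (exist _ x Bx) (exist _ x Bx) w H) as [z [E _]].
      subst w. exact (proj2_sig z). }
    split; split.
    + intro Bw. exists w. split; [exact Bw | exact (proj2 (Lms1 w))].
    + intros [x [Bx H]]. exact (Hcl x Bx H).
    + intro Bw. exists w. split; [exact Bw | split; [exact (proj2 (Lms1 w)) | exact Bw]].
    + intros [x [_ [_ Bw]]]. exact Bw.
Qed.
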